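(* Let $m,n,k$ be positive integers with $(m,k-1)=1$ and $n=\mathrm{ind}_m(k)$, let $G=G(m,n,k)=\langle a,b;\ a^m=1,\ b^n=1,\ b^{-1}ab=a^k\rangle$, let $S\subseteq\mathbb{Z}_m$ be a base, and suppose $\Sigma_G(S)$ is complete. Then $\Sigma_G(S)=\dot{\bigcup}_{x\in S^*}C(x,1)$ (a disjoint union) and $|\Sigma_G(S)|=m\,|S^*|$.
   Context: $\mathrm{ind}_m(k)$ is the least positive integer $d$ with $k^d\equiv 1\pmod m$. Every element of $G$ is written uniquely as $a^ib^j$ with $i\in\mathbb{Z}_m$, $j\in\mathbb{Z}_n$. For $t\ge 0$ let $k_t=k^t-1 \pmod m$. Maps are written on the right, and $\mu\circ\nu$ means ''first $\mu$, then $\nu$''. For $x,y\in\mathbb{Z}_m$ the mu-map $\mu(x,y):G\to G$ is $(a^ib^j)\mu(x,y)=a^{xik^j-yk_j}$. The container is $C(x,y)=\{\mu(x,yz): z\in\mathbb{Z}_m\}$. For $S\subseteq\mathbb{Z}_m$, $I(S)$ is the set of elements of $S$ invertible in $\mathbb{Z}_m$, and $S^*$ is the multiplicative subsemigroup of $\mathbb{Z}_m$ generated by $S$. A base is $S\subseteq\mathbb{Z}_m$ with $0\in S$ and $I(S)\neq\varnothing$. $\Sigma_G(S)$ is the semigroup under composition generated by $\{\mu(s,z): s\in S, z\in\mathbb{Z}_m\}$. For $x\in S^*$, $Y(x)=\{s^*z:\ s^*\in S^*, z\in\mathbb{Z}_m, \exists s\in S \text{ with } x\equiv ss^* \pmod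 m\}$ and the $x$-family is $\mathcal{F}_G(x,S)=\{C(x,y): y\in Y(x)\}$. The $x$-family is complete if $C(x,1)\in\mathcal{F}_G(x,S)$, and $\Sigma_G(S)$ is complete if the $x$-family is complete for every $x\in S^*$. *)

(* Defs.v *)
From HB Require Import structures.
From mathcomp Require Import all_boot all_algebra.
From mathcomp Require Import boolp.
Unset Printing Implicit Defensive.

(* Z_m, for m > 0, represented as ordinals below m.-1.+1 (= m when m > 0). *)
Definition Zm (m : nat) : finType := 'I_(m.-1).+1.

(* Elements a^i b^j of G(m,n,k) in normal form: pairs (i, j), i in Z_m, j in Z_n. *)
Definition Grp (m n : nat) : finType := (Zm m * Zm n)%type.

Definition zmul (m : nat) (x y : Zm m) : Zm m := inZp (x * y).

Definition is_ind (m k n : nat) : Prop :=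
  0 < n /\ k ^ n = 1 %[mod m] /\ (forall d, 0 < d -> k ^ d = 1 %[mod m] -> n <= d).

Definition kt (m k t : nat) : nat := (k ^ t - 1) %% m.

Definition mu (m n k : nat) (x y : Zm m) : {ffun Grp m n -> Grp m n} :=
  [ffun g : Grp m n =>
     (inZp (absz ((((x : nat) * (g.1 : nat) * k ^ (g.2 : nat))%:Z
                   - ((y : nat) * kt m k g.2)%:Z) %% (m%:Z))%Z) : Zm m,
      (inZp 0 : Zm n))].

(* composition "first f, then g" (maps written on the right) *)
Definition mcomp {T : finType} (f g : {ffun T -> T}) : {ffun T -> T} :=
  [ffun t => g (f t)].

Definition C (m n k : nat) (x y : Zm m) : {set {ffun Grp m n -> Grp m n}} :=
  [set mu m n k x (zmul m y z) | z : Zm m].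

Inductive in_Sigma (m n k : nat) (S : {set Zm m}) : {ffun Grp m n -> Grp m n} -> Prop :=
| Sigma_gen : forall s z, s \in S -> in_Sigma m n k S (mu m n k s z)
| Sigma_comp : forall f g, in_Sigma m n k S f -> in_Sigma m n k S g ->
                 in_Sigma m n k S (mcomp f g).

Definition Sigma (m n k : nat) (S : {set Zm m}) : {set {ffun Grp m n -> Grp m n}} :=
  [set f | `[< in_Sigma m n k S f >] ].

Inductive in_Sstar (m : nat) (S : {set Zm m}) : Zm m -> Prop :=
| Sstar_gen : forall s, s \in S -> in_Sstar m S s
| Sstar_mul : forall u v, in_Sstar m S u -> in_Sstar m S v -> in_Sstar m S (zmul m u v).

Definition Sstar (m : nat) (S : {set Zm m}) : {set Zm m} :=
  [set u | `[< in_Sstar m S u >] ].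

Definition IS (m : nat) (S : {set Zm m}) : {set Zm m} :=
  [set s in S | coprime s m].

Definition is_base (m : nat) (S : {set Zm m}) : Prop :=
  (inZp 0 : Zm m) \in S /\ IS m S != set0.

Definition Y (m : nat) (S : {set Zm m}) (x : Zm m) : {set Zm m} :=
  [set w | [exists sst in Sstar m S, exists z : Zm m,
              (w == zmul m sst z) && [exists s in S, x == zmul m s sst]]].

Definition family (m n k : nat) (S : {set Zm m}) (x : Zm m)
  : {set {set {ffun Grp m n -> Grp m n}}} :=
  [set C m n k x y | y in Y m S x].

Definition family_complete (m n k : nat) (S : {set Zm m}) (x : Zm m) : Prop :=
  C m n k x (inZp 1) \in family m n k S x.

Definition Sigma_complete (m n k : nat) (S : {set Zm m}) : Prop :=
  forall x, x \in Sstar m S -> family_complete m n k S x.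

(* Main.v *)
Require Import Defs.
From HB Require Import structures.
From mathcomp Require Import all_boot all_algebra.
From mathcomp Require Import boolp zify ring.
Import GRing.Theory Num.Theory.

Definition zr (m : nat) (A : int) : Zm m := inZp (absz (A %% m%:Z)%Z).

Lemma Zm_lt (m : nat) (x : Zm m) : 0 < m -> (x : nat) < m.
Proof. move=> m0; have := ltn_ord x; by case: m m0 x. Qed.

Lemma val_inZp (m : nat) (a : nat) : 0 < m -> val (inZp a : Zm m) = a %% m.
Proof. by case: m. Qed.

Lemma val_zr m A : 0 < m -> val (zr m A) = absz (A %% m%:Z)%Z.
Proof.
move=> m0; rewrite val_inZp // modn_small //.
have h1 : (0 <= (A %% m%:Z)%Z)%R by apply: modz_ge0; rewrite eqz_nat -lt0n.
have h2 : ((A %% m%:Z)%Z < m%:Z)%R by apply: ltz_pmod.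
lia.
Qed.

Lemma zr_eq m A B : 0 < m -> (zr m A = zr m B) <-> (A %% m%:Z = B %% m%:Z)%Z.
Proof.
move=> m0; split; last by rewrite /zr => ->.
move=> /(f_equal val); rewrite !val_zr //.
have h1 : (0 <= (A %% m%:Z)%Z)%R by apply: modz_ge0; rewrite eqz_nat -lt0n.
have h2 : (0 <= (B %% m%:Z)%Z)%R by apply: modz_ge0; rewrite eqz_nat -lt0n.
lia.
Qed.

Lemma modz_congr (m : nat) (A B q : int) : (A - B = q * m%:Z)%R -> (A %% m%:Z = B %% m%:Z)%Z.
Proof.
move=> h; apply/eqP; rewrite eqz_mod_dvd; apply/dvdzP; by exists q.
Qed.

Lemma zr_val m (x : Zm m) : 0 < m -> zr m (x : nat)%:Z = x.
Proof.
move=> m0; apply: val_inj; rewrite val_zr // modz_nat modn_small //; exact: Zm_lt.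
Qed.

Lemma muE m n k x y (g : Grp m n) :
  mu m n k x y g = (zr m (((x : nat) * (g.1 : nat) * k ^ (g.2 : nat))%:Z
                   - ((y : nat) * kt m k g.2)%:Z)%R, inZp 0).
Proof. by rewrite /mu ffunE. Qed.

Lemma mu_comp m n k x y x' y' : 0 < m -> 0 < n ->
  mcomp (mu m n k x y) (mu m n k x' y') = mu m n k (zmul m x' x) (zmul m x' y).
Proof.
case: m x y x' y' => [//|m] x y x' y' m0; case: n => [//|n] n0.
apply/ffunP => g; rewrite /mcomp ffunE !muE /=.
congr (_, _).
rewrite mod0n expn0 /kt expn0 subnn mod0n muln0 muln1 subr0.
apply: (proj2 (zr_eq _ _ _ m0)).
set X := (_ - _)%R.
have h1 : (0 <= (X %% m.+1%:Z)%Z)%R by apply: modz_ge0; rewrite eqz_nat -lt0n.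
have h2 : ((X %% m.+1%:Z)%Z < m.+1%:Z)%R by apply: ltz_pmod.
have -> : (`|(X %% m.+1%:Z)%Z| %% m.+1 = `|(X %% m.+1%:Z)%Z|)%N by rewrite modn_small //; lia.
rewrite PoszM gez0_abs // /X.
rewrite ?PoszM.
set kk := (k ^ g.2 - 1) %% m.+1.
set K := (k ^ g.2).
set i := (g.1 : nat).
rewrite -!modz_nat ?PoszM.
set KK := (((k ^ g.2 - 1)%N %% m.+1)%Z).
have mE : forall t : int, (t %% m.+1%:Z)%Z = (t - (t %/ m.+1%:Z)%Z * m.+1%:Z)%R.
  by move=> t; rewrite {2}(divz_eq t m.+1%:Z); ring.
set q1 := ((x%:Z * i%:Z * K%:Z - y%:Z * KK) %/ m.+1%:Z)%Z.
set q2 := ((x'%:Z * x%:Z) %/ m.+1%:Z)%Z.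
set q3 := ((x'%:Z * y%:Z) %/ m.+1%:Z)%Z.
apply: (@modz_congr m.+1 _ _ (- x'%:Z * q1 + q2 * i%:Z * K%:Z - q3 * KK)%R).
rewrite !mE -/q1 -/q2 -/q3; ring.
Qed.

Lemma zmulC m (u v : Zm m) : zmul m u v = zmul m v u.
Proof. by rewrite /zmul mulnC. Qed.

Lemma zmulA m (u v w : Zm m) : 0 < m -> zmul m u (zmul m v w) = zmul m (zmul m u v) w.
Proof.
case: m u v w => [//|m] u v w _; apply: val_inj => /=.
by rewrite modnMmr modnMml mulnA.
Qed.

Lemma zmul1 m (z : Zm m) : 0 < m -> zmul m (inZp 1) z = z.
Proof.
case: m z => [//|m] z _; apply: val_inj => /=.
by rewrite modnMml mul1n modn_small.
Qed.

Lemma Sstar_Sigma m n k S u : 0 < m -> 0 < n -> in_Sstar m S u ->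
  exists t, in_Sigma m n k S (mu m n k u t).
Proof.
move=> m0 n0; elim=> [s sS | u1 v _ [a ha] _ [b hb]].
  by exists s; apply: Sigma_gen.
exists (zmul m v a); rewrite zmulC -(@mu_comp m n k u1 a v b m0 n0); exact: Sigma_comp.
Qed.

Lemma Sigma_Sstar m n k S f : 0 < m -> 0 < n -> in_Sigma m n k S f ->
  exists x z, in_Sstar m S x /\ f = mu m n k x z.
Proof.
move=> m0 n0; elim=> [s z sS | f1 g _ [x [z [hx ->]]] _ [x' [z' [hx' ->]]]].
  by exists s, z; split=> //; apply: Sstar_gen.
exists (zmul m x' x), (zmul m x' z); split; last by rewrite mu_comp.
by rewrite zmulC; apply: Sstar_mul.
Qed.

Lemma inSstar m S x : (x \in Sstar m S) = `[< in_Sstar m S x >].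
Proof. by rewrite inE. Qed.

Lemma complete_Sigma m n k S x z : 0 < m -> 0 < n -> Sigma_complete m n k S ->
  in_Sstar m S x -> in_Sigma m n k S (mu m n k x z).
Proof.
move=> m0 n0 hc hx.
have := hc x; rewrite inSstar => /(_ (asboolT hx)).
rewrite /family_complete => /imsetP [y].
rewrite inE => /existsP [sst] /andP [hsst] /existsP [z0] /andP [/eqP ey] /existsP [s] /andP [sS /eqP ex].
move=> eC.
have : mu m n k x z \in C m n k x (inZp 1).
  by apply/imsetP; exists z => //; rewrite zmul1.
rewrite eC => /imsetP [z1 _ ->].
rewrite inSstar in hsst; move/asboolP: hsst => hsst.
have [t ht] := @Sstar_Sigma m n k S sst m0 n0 hsst.
rewrite ey -zmulA // ex zmulC -(@mu_comp m n k s (zmul m z0 z1) sst t m0 n0).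
apply: Sigma_comp => //; exact: Sigma_gen.
Qed.

Lemma mu_inj m n k x z x' z' : 0 < m -> 0 < k -> coprime m k.-1 -> is_ind m k n ->
  mu m n k x z = mu m n k x' z' -> x = x' /\ z = z'.
Proof.
move=> m0 k0 cop [n0 [hn _]] E.
move: x z x' z' m0 cop hn E; case: m => [//|[|m]] x z x' z' m0 cop hn E.
  by clear E; split; apply: val_inj; case: x z x' z' => [[|//] ?] [[|//] ?] [[|//] ?] [[|//] ?].
move: n0 hn E; case: n => [//|[|n]] n0 hn E.
  exfalso; move: hn; rewrite expn1 => /eqP; rewrite eqn_mod_dvd // subn1 => hd.
  by have := coprime_dvdr hd cop; rewrite /coprime gcdnn.
have h1 := congr1 (fun f : {ffun Grp m.+2 n.+2 -> Grp m.+2 n.+2} => (f (inZp 1, inZp 0)).1) E.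
have h2 := congr1 (fun f : {ffun Grp m.+2 n.+2 -> Grp m.+2 n.+2} => (f (inZp 0, inZp 1)).1) E.
rewrite /= !muE /= in h1 h2.
have o1 : 1 %% m.+2 = 1 by rewrite modn_small.
have o2 : 1 %% n.+2 = 1 by rewrite modn_small.
have kt0 : kt m.+2 k 0 = 0 by rewrite /kt expn0 subnn mod0n.
rewrite !mod0n o1 o2 kt0 expn0 !muln1 !muln0 !subr0 !zr_val // in h1 h2.
split => //.
set c := kt m.+2 k 1 in h2.
have hc : coprimez m.+2 c.
  by rewrite coprimezE /= /c /kt coprime_modr expn1 subn1.
rewrite mul0n in h2; move/(zr_eq _ _ _ m0)/eqP: h2; rewrite eqz_mod_dvd.
have -> : ((Posz 0 - Posz (z * c)%N) - (Posz 0 - Posz (z' * c)%N) = (z'%:Z - z%:Z) * c%:Z)%R.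
  by rewrite !PoszM; ring.
rewrite Gauss_dvdzl // => /dvdzP [q hq].
have lz := @Zm_lt _ z m0; have lz' := @Zm_lt _ z' m0.
have : (q = 0)%R.
  have [q0|[q0|q0]] : (q = 0 \/ 1 <= q \/ q <= -1)%R by lia.
  - by [].
  - have : (q * m.+2%:Z >= m.+2%:Z)%R by rewrite ler_peMl.
    lia.
  - have : (q * m.+2%:Z <= - m.+2%:Z)%R by rewrite -mulN1r ler_wpM2r.
    lia.
move=> q0; rewrite q0 mul0r in hq; apply/esym/ord_inj; move/eqP: hq; by rewrite subr_eq0 => /eqP [].
Qed.

Theorem theorem4p8 (m n k : nat) (S : {set Zm m}) :
  0 < m -> 0 < k -> coprime m k.-1 -> is_ind m k n ->
  is_base m S -> Sigma_complete m n k S ->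
  Sigma m n k S = \bigcup_(x in Sstar m S) C m n k x (inZp 1)
  /\ (forall x y, x \in Sstar m S -> y \in Sstar m S -> x != y ->
        [disjoint C m n k x (inZp 1) & C m n k y (inZp 1)])
  /\ #|Sigma m n k S| = m * #|Sstar m S|.
Proof.
move=> m0 k0 cop hind hbase hc.
have n0 : 0 < n by case: hind.
have Sig : forall f, f \in Sigma m n k S <->
    exists x z, x \in Sstar m S /\ f = mu m n k x z.
  move=> f; split.
    rewrite inE => /asboolP h.
    have [x [z [hx ->]]] := @Sigma_Sstar m n k S f m0 n0 h.
    by exists x, z; split => //; rewrite inSstar; apply/asboolP.
  move=> [x [z [hx ->]]]; rewrite inE; apply/asboolP.
  by apply: complete_Sigma => //; move: hx; rewrite inSstar => /asboolP.
have C1 : forall x, C m n k x (inZp 1) = [set mu m n k x z | z : Zm m].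
  by move=> x; rewrite /C; apply: eq_imset => z; rewrite zmul1.
have inj : injective (fun p : Zm m * Zm m => mu m n k p.1 p.2).
  move=> [x z] [x' z'] /= /(@mu_inj m n k _ _ _ _ m0 k0 cop hind) [-> ->] //.
have SigE : Sigma m n k S =
    [set mu m n k p.1 p.2 | p in setX (Sstar m S) [set: Zm m]].
  apply/setP => f; apply/idP/imsetP.
    by move/Sig => [x [z [hx ->]]]; exists (x, z) => //; rewrite inE hx inE.
  by move=> [[x z]]; rewrite inE /= => /andP [hx _] ->; apply/Sig; exists x, z.
split.
  apply/setP => f; apply/idP/bigcupP.
    move/Sig => [x [z [hx ->]]]; exists x => //; rewrite C1; apply/imsetP; by exists z.
  by case=> x hx; rewrite C1 => /imsetP [z _ ->]; apply/Sig; exists x, z.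
split.
  move=> x y hx hy nxy; rewrite -setI_eq0; apply/eqP/setP => f.
  rewrite inE in_set0 !C1; apply/negP => /andP [/imsetP [z _ ->] /imsetP [z' _]].
  move/(@mu_inj m n k _ _ _ _ m0 k0 cop hind) => [exy _]; by rewrite exy eqxx in nxy.
rewrite SigE card_imset // cardsX cardsT card_ord prednK // mulnC //.
Qed.
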